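(* Let $A=(a_{ij})_{i,j\in\{1,\dots,\theta\}}$ be an indecomposable generalized Cartan matrix of indefinite type, $Q=\bigoplus_i\mathbb Z\alpha_i$ its root lattice, $Q_+=\sum_i\mathbb N_0\alpha_i$, and $W$ its Weyl group. Then for every $\gamma\in Q_+\setminus\{0\}$ the set $W\gamma\cap Q_+$ is infinite.
   Context: $W$ is the subgroup of $\mathrm{GL}(Q)$ generated by the simple reflections $s_i(\alpha_j)=\alpha_j-a_{ij}\alpha_i$. Types (finite, affine, indefinite) of indecomposable generalized Cartan matrices are in the sense of Kac. *)

(* Defs.v *)
From HB Require Import structures.
From mathcomp Require Import all_boot all_order all_algebra.
Set Implicit Arguments. Unset Strict Implicit. Unset Printing Implicit Defensive.
Import Order.TTheory GRing.Theory Num.Theory.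
Local Open Scope ring_scope.

(* A theta x theta integer matrix A; elements of the root lattice
   Q = (+)_i Z alpha_i are integer column vectors (coordinates in the
   basis alpha_1..alpha_theta). *)

Definition is_GCM (n : nat) (A : 'M[int]_n) : Prop :=
  (forall i, A i i = 2) /\
  (forall i j, i != j -> A i j <= 0) /\
  (forall i j, A i j = 0 <-> A j i = 0).

Definition indecomposable (n : nat) (A : 'M[int]_n) : Prop :=
  forall I : {set 'I_n},
    (forall i j, i \in I -> j \notin I -> A i j = 0) ->
    I = set0 \/ I = setT.

(* Kac, Thm 4.3 (Ind): there is u > 0 with Au < 0, and
   Av >= 0, v >= 0 imply v = 0.  Vectors taken rational. *)
Definition indefinite_type (n : nat) (A : 'M[int]_n) : Prop :=
  let Aq := map_mx (fun z : int => z%:~R : rat) A in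
  (exists u : 'cV[rat]_n,
      (forall i, 0 < u i 0) /\ (forall i, (Aq *m u) i 0 < 0)) /\
  (forall v : 'cV[rat]_n,
      (forall i, 0 <= v i 0) -> (forall i, 0 <= (Aq *m v) i 0) -> v = 0).

(* simple reflection s_i(beta) = beta - (sum_j a_ij beta_j) alpha_i,
   so that s_i(alpha_j) = alpha_j - a_ij alpha_i *)
Definition sref (n : nat) (A : 'M[int]_n) (i : 'I_n) (b : 'cV[int]_n)
  : 'cV[int]_n :=
  \col_k (b k 0 - (k == i)%:R * (A *m b) i 0).

Definition word_act (n : nat) (A : 'M[int]_n) (w : seq 'I_n) (b : 'cV[int]_n)
  : 'cV[int]_n :=
  foldr (sref A) b w.

(* beta in W gamma; W is generated by the involutions s_i, so its
   elements are exactly the finite products of simple reflections *)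
Definition in_W_orbit (n : nat) (A : 'M[int]_n) (gamma beta : 'cV[int]_n)
  : Prop :=
  exists w : seq 'I_n, beta = word_act A w gamma.

Definition in_Qplus (n : nat) (b : 'cV[int]_n) : Prop :=
  forall i, 0 <= b i 0.

(* Main.v *)
Require Import Defs.
From HB Require Import structures.
From mathcomp Require Import all_boot all_order all_algebra.
Local Open Scope ring_scope.
Import Order.TTheory GRing.Theory Num.Theory.
Set Implicit Arguments.

Definition ht (n : nat) (b : 'cV[int]_n) : int := \sum_k b k 0.

Lemma ht_ge0 n (b : 'cV[int]_n) : in_Qplus b -> 0 <= ht b.
Proof. by move=> H; apply: sumr_ge0 => k _; apply: H. Qed.

Lemma ht0 n : ht (0 : 'cV[int]_n) = 0.
Proof. by rewrite /ht big1 // => k _; rewrite mxE. Qed.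

Lemma neg_entry n (A : 'M[int]_n) : indefinite_type A ->
  forall b : 'cV[int]_n, in_Qplus b -> b != 0 -> exists i, (A *m b) i 0 < 0.
Proof.
move=> [_ Hv] b Hb Hb0.
case: (boolP [exists i, (A *m b) i 0 < 0]) => [/existsP [i Hi]|Hn]; first by exists i.
exfalso; move: Hb0 => /negP; apply; apply/eqP.
have E : map_mx (fun z : int => z%:~R : rat) b = 0.
  apply: Hv => i.
    by rewrite mxE ler0z; apply: Hb.
  have -> : (map_mx (fun z : int => z%:~R : rat) A *m map_mx (fun z : int => z%:~R : rat) b) i 0
           = ((A *m b) i 0)%:~R.
    rewrite !mxE rmorph_sum /=; apply: eq_bigr => j _.
    by rewrite !mxE intrM.
  rewrite ler0z leNgt; apply/negP => H; move/existsPn: Hn => /(_ i).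
  by rewrite H.
apply/matrixP => i j; rewrite (ord1 j).
move/matrixP: E => /(_ i 0); rewrite !mxE => /eqP.
by rewrite intr_eq0 => /eqP.
Qed.

Lemma sref_ht n (A : 'M[int]_n) i b :
  ht (sref A i b) = ht b - (A *m b) i 0.
Proof.
rewrite /ht /sref.
rewrite (eq_bigr (fun k => b k 0 - (k == i)%:R * (A *m b) i 0)); last first.
  by move=> k _; rewrite mxE.
rewrite sumrB; congr (_ - _).
rewrite (bigD1 i) //= eqxx mul1r big1 ?addr0 // => k /negbTE ->.
by rewrite mul0r.
Qed.

Lemma sref_Qplus n (A : 'M[int]_n) i b :
  in_Qplus b -> (A *m b) i 0 < 0 -> in_Qplus (sref A i b).
Proof.
move=> Hb Hi k; rewrite mxE.
have := Hb k; case: (k == i) => /=.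
  by rewrite mul1r => H; rewrite subr_ge0; apply: le_trans (ltW Hi) H.
by rewrite mul0r subr0.
Qed.

Lemma grow n (A : 'M[int]_n) : indefinite_type A ->
  forall gamma : 'cV[int]_n, in_Qplus gamma -> gamma != 0 ->
  forall N : nat, exists w, [/\ in_Qplus (word_act A w gamma),
     word_act A w gamma != 0 & (N%:Z <= ht (word_act A w gamma))].
Proof.
move=> Hind gamma Hg Hg0; elim=> [|N [w [Hq Hn0 Hh]]].
  by exists [::]; split => //; apply: ht_ge0.
have [i Hi] := neg_entry Hind Hq Hn0.
exists (i :: w) => /=.
have Hh' : ht (sref A i (word_act A w gamma)) > ht (word_act A w gamma).
  by rewrite sref_ht -subr_gt0 addrAC subrr add0r oppr_gt0.
split.
- exact: sref_Qplus.
- by apply/eqP => E; move: Hh'; rewrite E ht0 ltNge ht_ge0.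
- by rewrite -addn1 PoszD lezD1; apply: le_lt_trans Hh Hh'.
Qed.

Theorem lemma3p5 (n : nat) (A : 'M[int]_n) :
  is_GCM A -> indecomposable A -> indefinite_type A ->
  forall gamma : 'cV[int]_n, in_Qplus gamma -> gamma != 0 ->
  forall s : seq 'cV[int]_n,
    exists beta : 'cV[int]_n,
      [/\ in_W_orbit A gamma beta, in_Qplus beta & beta \notin s].
Proof.
move=> _ _ Hind gamma Hg Hg0 s.
have [w [Hq _ Hh]] := grow Hind Hg Hg0 (\sum_(x <- s) absz (ht x)).+1.
exists (word_act A w gamma); split => //; first by exists w.
apply/negP => Hin.
have H1 : (absz (ht (word_act A w gamma)) <= \sum_(x <- s) absz (ht x))%N.
  by rewrite (big_rem _ Hin) /= leq_addr.
have : ht (word_act A w gamma) <= (\sum_(x <- s) absz (ht x))%N%:Z.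
  apply: le_trans (ler_norm _) _.
  by rewrite -abszE lez_nat.
by rewrite leNgt; move/negP; apply; apply: lt_le_trans Hh; rewrite ltz_nat.
Qed.
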